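(* Fix a $C^0$-concept over a topologized field $\mathbb{K}$. Let $E,F\in\mathcal{M}$, $U\subseteq E$ open, $f\in C^0(U,F)$, and suppose there exists a $C^0$-map $g\colon P\to F$ defined on an open neighbourhood $P$ of $U\times E\times\{0\}$ in $U^{[1]}$ such that $g(x,y,t)=\frac{f(x+ty)-f(x)}{t}$ for all $(x,y,t)\in P$ with $t\ne0$. Then $f$ is of class $C^1$ and $g=f^{[1]}|_P$.
   Context: Let $\mathbb{K}$ be a commutative ring with unit (here a field) carrying a topology. A $C^0$-concept over $\mathbb{K}$ consists of: (a) a class $\mathcal{M}$ of topologized $\mathbb{K}$-modules with $\mathbb{K}\in\mathcal{M}$; (b) for $E,F\in\mathcal{M}$ and open $U\subseteq E$, a set $C^0(U,F)$ of continuous maps; (c) for $E_1,E_2\in\mathcal{M}$ a topology on $E_1\times E_2$ (not necessarily the product topology) making it a member of $\mathcal{M}$; subject to: (I.1) composites of $C^0$-maps are $C^0$, identities and inclusions of open subsets are $C^0$; (I.2) $x\mapsto rx+b$ is $C^0$; (I.3) $t\mapsto tv+x$ is $C^0$; (I.4) $\mathbb{K}^\times$ is open and inversion is $C^0$; (I.5) a map which is $C^0$ on each member of an open cover of its domain is $C^0$; (II.1) projections and $v\mapsto(v,y)$, $w\mapsto(x,w)$ are $C^0$; (II.2) $f_1\times f_2$ is $C^0$ for $C^0$-maps $f_i$; (II.3) diagonals are $C^0$; (II.4) exchange/associativity maps of products are $C^0$ both ways; (II.5) addition and scalar multiplication are $C^0$; (III) a $C^0$-map on open $U\subseteq\mathbb{K}$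 is determined by its values on $U\cap\mathbb{K}^\times$. $U^{[1]}:=\{(x,v,t)\in U\times E\times\mathbb{K}:x+tv\in U\}$, open in $E\times E\times\mathbb{K}$. A $C^0$-map $f$ is $C^1$ if there is a $C^0$-map $f^{[1]}\colon U^{[1]}\to F$ with $f(x+tv)-f(x)=t\,f^{[1]}(x,v,t)$ for all $(x,v,t)\in U^{[1]}$. *)

(* Defs.v *)
From mathcomp Require Import all_boot all_algebra.
From mathcomp Require Import classical_sets.

Set Implicit Arguments.
Unset Strict Implicit.
Unset Printing Implicit Defensive.

Import GRing.Theory.
Local Open Scope ring_scope.
Local Open Scope classical_set_scope.

Definition is_topology (X : Type) (O : set (set X)) : Prop :=
  [/\ O set0, O setT,
      (forall A B, O A -> O B -> O (A `&` B)) &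
      (forall (I : Type) (F : I -> set X), (forall i, O (F i)) ->
         O (\bigcup_i F i))].

Record topmod (K : fieldType) := TopMod {
  tm_car :> lmodType K;
  tm_open : set (set tm_car) }.
Arguments TopMod {K}.
Arguments tm_open {K} t _.

Definition KTM (K : fieldType) (tK : set (set K)) : topmod K := TopMod K^o tK.

(* The product E1 x E2 with a chosen (not necessarily product) topology. *)
Definition PTM (K : fieldType)
  (ptop : forall E1 E2 : topmod K, set (set (E1 * E2)%type))
  (E1 E2 : topmod K) : topmod K :=
  TopMod (E1 * E2)%type (ptop E1 E2).

Definition cont_on (K : fieldType) (E F : topmod K) (U : set E) (f : E -> F) :=
  forall O, tm_open F O -> tm_open E (U `&` f @^-1` O).

(* A map U -> F (U open in E) is represented by any total function E -> F;
   only its values on U matter (axiom c_ext). *)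
Unset Implicit Arguments.
Record C0Concept (K : fieldType) := {
  c_topK : set (set K);
  c_mem : topmod K -> Prop;
  c_ptop : forall E1 E2 : topmod K, set (set (E1 * E2)%type);
  c_C0 : forall E F : topmod K, set E -> (E -> F) -> Prop;
  c_topK_top : is_topology c_topK;
  c_mem_top : forall E, c_mem E -> is_topology (tm_open E);
  c_mem_K : c_mem (KTM c_topK);
  c_mem_prod : forall E1 E2, c_mem E1 -> c_mem E2 -> c_mem (PTM c_ptop E1 E2);
  c_C0_open : forall E F U f, c_mem E -> c_mem F -> c_C0 E F U f -> tm_open E U;
  c_C0_cont : forall E F U f, c_mem E -> c_mem F -> c_C0 E F U f -> cont_on U f;
  c_ext : forall (E F : topmod K) (U : set E) (f g : E -> F), c_mem E -> c_mem F ->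
    (forall x, U x -> f x = g x) -> c_C0 E F U f -> c_C0 E F U g;
  c_comp : forall (E F G : topmod K) (U : set E) (V : set F) (f : E -> F) (g : F -> G),
    c_mem E -> c_mem F -> c_mem G -> c_C0 E F U f -> c_C0 F G V g ->
    (forall x, U x -> V (f x)) -> c_C0 E G U (g \o f);
  c_id_incl : forall (E : topmod K) (U : set E), c_mem E -> tm_open E U -> c_C0 E E U id;
  c_affine : forall (E : topmod K) (r : K) (b : E), c_mem E ->
    c_C0 E E setT (fun x => r *: x + b);
  c_line : forall (E : topmod K) (v x : E), c_mem E ->
    c_C0 (KTM c_topK) E setT (fun t : K^o => t *: v + x);
  c_units_open : c_topK [set t | t != 0];
  c_inv : c_C0 (KTM c_topK) (KTM c_topK) [set t | t != 0]
            (fun t : K^o => (t^-1 : K^o));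
  c_local : forall (E F : topmod K) (U : set E) (f : E -> F) (I : Type) (Ui : I -> set E),
    c_mem E -> c_mem F -> (forall i, tm_open E (Ui i)) ->
    U = \bigcup_i Ui i -> (forall i, c_C0 E F (Ui i) f) -> c_C0 E F U f;
  c_fst : forall E1 E2, c_mem E1 -> c_mem E2 ->
    c_C0 (PTM c_ptop E1 E2) E1 setT (fun p : (E1 * E2)%type => p.1);
  c_snd : forall E1 E2, c_mem E1 -> c_mem E2 ->
    c_C0 (PTM c_ptop E1 E2) E2 setT (fun p : (E1 * E2)%type => p.2);
  c_inl : forall (E1 E2 : topmod K) (y : E2), c_mem E1 -> c_mem E2 ->
    c_C0 E1 (PTM c_ptop E1 E2) setT (fun v : E1 => (v, y));
  c_inr : forall (E1 E2 : topmod K) (x : E1), c_mem E1 -> c_mem E2 ->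
    c_C0 E2 (PTM c_ptop E1 E2) setT (fun w : E2 => (x, w));
  c_prod_map : forall (E1 E2 F1 F2 : topmod K) (U1 : set E1) (U2 : set E2)
      (f1 : E1 -> F1) (f2 : E2 -> F2),
    c_mem E1 -> c_mem E2 -> c_mem F1 -> c_mem F2 ->
    c_C0 E1 F1 U1 f1 -> c_C0 E2 F2 U2 f2 ->
    c_C0 (PTM c_ptop E1 E2) (PTM c_ptop F1 F2) (U1 `*` U2)
      (fun p : (E1 * E2)%type => ((f1 p.1, f2 p.2) : (F1 * F2)%type));
  c_diag : forall E, c_mem E ->
    c_C0 E (PTM c_ptop E E) setT (fun x : E => (x, x));
  c_swap : forall E1 E2, c_mem E1 -> c_mem E2 ->
    c_C0 (PTM c_ptop E1 E2) (PTM c_ptop E2 E1) setT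
      (fun p : (E1 * E2)%type => ((p.2, p.1) : (E2 * E1)%type));
  c_assoc : forall E1 E2 E3, c_mem E1 -> c_mem E2 -> c_mem E3 ->
    c_C0 (PTM c_ptop (PTM c_ptop E1 E2) E3) (PTM c_ptop E1 (PTM c_ptop E2 E3))
      setT (fun p : ((E1 * E2) * E3)%type =>
              ((p.1.1, (p.1.2, p.2)) : (E1 * (E2 * E3))%type));
  c_assoc_inv : forall E1 E2 E3, c_mem E1 -> c_mem E2 -> c_mem E3 ->
    c_C0 (PTM c_ptop E1 (PTM c_ptop E2 E3)) (PTM c_ptop (PTM c_ptop E1 E2) E3)
      setT (fun p : (E1 * (E2 * E3))%type =>
              (((p.1, p.2.1), p.2.2) : ((E1 * E2) * E3)%type));
  c_add : forall E, c_mem E ->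
    c_C0 (PTM c_ptop E E) E setT (fun p : (E * E)%type => p.1 + p.2);
  c_scale : forall E, c_mem E ->
    c_C0 (PTM c_ptop (KTM c_topK) E) E setT
      (fun p : (K^o * E)%type => p.1 *: p.2);
  c_III : forall (F : topmod K) (U : set K^o) (f g : K^o -> F), c_mem F ->
    c_topK U -> c_C0 (KTM c_topK) F U f -> c_C0 (KTM c_topK) F U g ->
    (forall t, U t -> t != 0 -> f t = g t) -> forall t, U t -> f t = g t
}.

Set Implicit Arguments.
Arguments c_C0 {K} c E F _ _.
Arguments c_mem {K} c _.
Arguments c_ptop {K} c E1 E2 _.
Arguments c_topK {K} c _.

Section C1.
Variables (K : fieldType) (C : C0Concept K).

Definition E3 (E : topmod K) : topmod K :=
  PTM (c_ptop C) (PTM (c_ptop C) E E) (KTM (c_topK C)).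

Definition Ubr (E : topmod K) (U : set E) : set ((E * E) * K^o)%type :=
  [set p | U p.1.1 /\ U (p.1.1 + p.2 *: p.1.2)].

Definition is_f1 (E F : topmod K) (U : set E) (f : E -> F)
  (f1 : ((E * E) * K^o)%type -> F) : Prop :=
  c_C0 C (E3 E) F (Ubr U) f1 /\
  forall (x v : E) (t : K), Ubr U ((x, v), t) ->
    f (x + t *: v) - f x = t *: f1 ((x, v), t).

Definition isC1 (E F : topmod K) (U : set E) (f : E -> F) : Prop :=
  c_C0 C E F U f /\ exists f1, is_f1 U f f1.

End C1.

(* Main.v *)
Require Import Defs.
From mathcomp Require Import all_boot all_algebra.
From mathcomp Require Import classical_sets boolp.
Import GRing.Theory.
Local Open Scope ring_scope.
Local Open Scope classical_set_scope.

Set Implicit Arguments.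
Section H.
Variables (K : fieldType) (C : C0Concept K).

Lemma restr (E F : topmod K) (U V : set E) (f : E -> F) :
  c_mem C E -> c_mem C F -> c_C0 C E F U f -> tm_open E V -> V `<=` U ->
  c_C0 C E F V f.
Proof.
move=> mE mF hf oV sVU.
have := @c_comp K C E E F V U id f mE mE mF (@c_id_incl K C E V mE oV) hf sVU.
by apply: c_ext.
Qed.

Lemma pairC0 (E A B : topmod K) (W : set E) (a : E -> A) (b : E -> B) :
  c_mem C E -> c_mem C A -> c_mem C B -> tm_open E W ->
  c_C0 C E A W a -> c_C0 C E B W b ->
  c_C0 C E (PTM (c_ptop C) A B) W (fun x => (a x, b x)).
Proof.
move=> mE mA mB oW ha hb.
have hd := @restr E (PTM (c_ptop C) E E) setT W (fun x => (x, x)) mE (@c_mem_prod K C _ _ mE mE) (@c_diag K C _ mE) oW (fun _ _ => I).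
have hp := @c_prod_map K C E E A B W W a b mE mE mA mB ha hb.
have := @c_comp K C E (PTM (c_ptop C) E E) (PTM (c_ptop C) A B) W (W `*` W) _ _
  mE (@c_mem_prod K C _ _ mE mE) (@c_mem_prod K C _ _ mA mB) hd hp (fun x Wx => conj Wx Wx).
by [].
Qed.

Lemma openI (E : topmod K) (A B : set E) : c_mem C E ->
  tm_open E A -> tm_open E B -> tm_open E (A `&` B).
Proof. by move=> mE; case: (@c_mem_top K C _ mE) => _ _ hI _; apply: hI. Qed.

Lemma open_pre (E F : topmod K) (f : E -> F) (O : set F) :
  c_mem C E -> c_mem C F -> c_C0 C E F setT f -> tm_open F O ->
  tm_open E (f @^-1` O).
Proof.
move=> mE mF hf oO; have := @c_C0_cont K C _ _ _ _ mE mF hf _ oO.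
by rewrite setTI.
Qed.

End H.

Theorem lemma2p6 (K : fieldType) (C : C0Concept K) (E F : topmod K)
  (U : set E) (f : E -> F)
  (P : set ((E * E) * K^o)%type) (g : ((E * E) * K^o)%type -> F) :
  c_mem C E -> c_mem C F -> tm_open E U -> c_C0 C E F U f ->
  tm_open (E3 C E) P -> P `<=` Ubr U ->
  (forall (x y : E), U x -> P ((x, y), 0)) ->
  c_C0 C (E3 C E) F P g ->
  (forall (x y : E) (t : K), P ((x, y), t) -> t != 0 ->
     g ((x, y), t) = t^-1 *: (f (x + t *: y) - f x)) ->
  isC1 C U f /\
  (forall f1, is_f1 C U f f1 -> forall p, P p -> f1 p = g p).
Proof.
move=> mE mF oU hf oP sPU P0 hg gE.
pose KK := KTM (c_topK C).
have mK : c_mem C KK := @c_mem_K K C.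
have mEE : c_mem C (PTM (c_ptop C) E E) := @c_mem_prod K C _ _ mE mE.
have mE3 : c_mem C (E3 C E) := @c_mem_prod K C _ _ mEE mK.
have mFF : c_mem C (PTM (c_ptop C) F F) := @c_mem_prod K C _ _ mF mF.
have mKE : c_mem C (PTM (c_ptop C) KK E) := @c_mem_prod K C _ _ mK mE.
have mKF : c_mem C (PTM (c_ptop C) KK F) := @c_mem_prod K C _ _ mK mF.
have h1 : c_C0 C (E3 C E) (PTM (c_ptop C) E E) setT (fun p => p.1) :=
  @c_fst K C _ _ mEE mK.
have h2 : c_C0 C (E3 C E) KK setT (fun p => p.2) := @c_snd K C _ _ mEE mK.
have h11 : c_C0 C (E3 C E) E setT (fun p => p.1.1).
  refine (@c_comp K C _ _ _ setT setT _ _ mE3 mEE mE h1 (@c_fst K C _ _ mE mE) (fun _ _ => I)).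
have h12 : c_C0 C (E3 C E) E setT (fun p => p.1.2).
  refine (@c_comp K C _ _ _ setT setT _ _ mE3 mEE mE h1 (@c_snd K C _ _ mE mE) (fun _ _ => I)).
have oT : tm_open (E3 C E) setT by case: (@c_mem_top K C _ mE3).
have hh : c_C0 C (E3 C E) E setT (fun p => p.1.1 + p.2 *: p.1.2).
  have hs := @c_comp K C _ _ _ setT setT _ _ mE3 mKE mE
     (@pairC0 K C (E3 C E) KK E setT (fun p => p.2) (fun p => p.1.2) mE3 mK mE oT h2 h12)
     (@c_scale K C _ mE) (fun _ _ => I).
  refine (@c_comp K C _ _ _ setT setT _ _ mE3 (@c_mem_prod K C _ _ mE mE) mE
     (@pairC0 K C (E3 C E) E E setT _ _ mE3 mE mE oT h11 hs)
     (@c_add K C _ mE) (fun _ _ => I)).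
pose W : set (E3 C E) := ((fun p : E3 C E => p.1.1) @^-1` U) `&`
          ((fun p : E3 C E => p.1.1 + p.2 *: p.1.2) @^-1` U) `&`
          ((fun p : E3 C E => p.2) @^-1` [set t : K | t != 0]).
have oW : tm_open (E3 C E) W.
  apply: (@openI K C) => //; first apply: (@openI K C) => //.
  - exact: (@open_pre K C _ _ _ _ mE3 mE h11 oU).
  - exact: (@open_pre K C _ _ _ _ mE3 mE hh oU).
  - exact: (@open_pre K C _ _ _ _ mE3 mK h2 (@c_units_open K C)).
pose q := fun p : E3 C E =>
  p.2^-1 *: (f (p.1.1 + p.2 *: p.1.2) - f p.1.1).
have hq : c_C0 C (E3 C E) F W q.
  have ha : c_C0 C (E3 C E) KK W (fun p => (p.2^-1 : K^o)).
    refine (@c_comp K C _ _ _ W _ _ _ mE3 mK mK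
      (@restr K C _ _ _ _ _ mE3 mK h2 oW (fun _ _ => I)) (@c_inv K C) (fun p Wp => Wp.2)).
  have hfh : c_C0 C (E3 C E) F W (fun p => f (p.1.1 + p.2 *: p.1.2)).
    refine (@c_comp K C _ _ _ W _ _ _ mE3 mE mF
      (@restr K C _ _ _ _ _ mE3 mE hh oW (fun _ _ => I)) hf (fun p Wp => Wp.1.2)).
  have hff : c_C0 C (E3 C E) F W (fun p => f p.1.1).
    refine (@c_comp K C _ _ _ W _ _ _ mE3 mE mF
      (@restr K C _ _ _ _ _ mE3 mE h11 oW (fun _ _ => I)) hf (fun p Wp => Wp.1.1)).
  have hn : c_C0 C (E3 C E) F W (fun p => - f p.1.1).
    have := (@c_comp K C _ _ _ W setT _ _ mE3 mF mF hff
      (@c_affine K C F (-1) 0 mF) (fun _ _ => I)).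
    apply: (@c_ext K C _ _ W _ _ mE3 mF) => p _ /=.
    by rewrite addr0 scaleN1r.
  have hd : c_C0 C (E3 C E) F W (fun p => f (p.1.1 + p.2 *: p.1.2) - f p.1.1).
    refine (@c_comp K C _ _ _ W setT _ _ mE3 mFF mF
      (@pairC0 K C (E3 C E) F F W _ _ mE3 mF mF oW hfh hn)
      (@c_add K C _ mF) (fun _ _ => I)).
  refine (@c_comp K C _ _ _ W setT _ _ mE3 mKF mF
      (@pairC0 K C (E3 C E) KK F W _ _ mE3 mK mF oW ha hd)
      (@c_scale K C _ mF) (fun _ _ => I)).
pose f1 := fun p => if pselect (P p) then g p else q p.
have f1E : forall p, Ubr U p -> p.2 != 0 -> f1 p = q p.
  move=> [[x y] t] _ /= t0; rewrite /f1; case: pselect => //= Pp.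
  exact: gE.
split.
  split => //; exists f1; split.
    refine (@c_local K C (E3 C E) F (Ubr U) f1 bool (fun b : bool => if b then P else W) mE3 mF _ _ _).
    - by case.
    - apply/seteqP; split.
        move=> [[x y] t] [Ux Uh].
        have [->|t0] := eqVneq t 0.
          by exists true => //; apply: P0.
        by exists false => //=; split => //; split.
      move=> p [[] _ Hp]; first exact: sPU.
      by case: Hp => -[? ?] _; split.
    - case.
        refine (@c_ext K C (E3 C E) F P g f1 mE3 mF _ hg) => p Pp.
        by rewrite /f1; case: pselect.
      refine (@c_ext K C (E3 C E) F W q f1 mE3 mF _ hq) => p [[U1 U2] t0].
      by rewrite f1E.
  move=> x v t Hp.
  have [->|t0] := eqVneq t 0.
    by rewrite !scale0r addr0 subrr.
  rewrite f1E //= /q /= scalerA mulfV // scale1r //.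
move=> f1' [hf1 ef1] p Pp.
case: p Pp => [[x y] t] Pp.
pose V : set KK := [set s : K | P ((x, y), s)].
have hin : c_C0 C KK (E3 C E) setT (fun s : K^o => ((x, y), s)) :=
  @c_inr K C (PTM (c_ptop C) E E) KK ((x, y) : PTM (c_ptop C) E E) mEE mK.
have oV : c_topK C V := @open_pre K C _ _ _ _ mK mE3 hin oP.
have hinV := @restr K C _ _ _ _ _ mK mE3 hin oV (fun _ _ => I).
apply: (@c_III K C F V (fun s => f1' ((x, y), s)) (fun s => g ((x, y), s)) mF oV _ _ _ t Pp).
- refine (@c_comp K C _ _ _ V _ _ _ mK mE3 mF hinV hf1 (fun s Vs => sPU _ Vs)).
- refine (@c_comp K C _ _ _ V _ _ _ mK mE3 mF hinV hg (fun s Vs => Vs)).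
- move=> s Vs s0; rewrite gE // ef1; last exact: sPU.
  by rewrite scalerA mulVf // scale1r.
Qed.
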